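(* Let $M$ be a categorical monoid, $\mathcal F$ a family of finite subgroups of $\mathrm{Ob}(M)$, and $G$ a discrete group. Let $f\colon C\to D$ be a $\mathcal G_{\mathcal F,G}$-equivalence in $(M\times G)\text{-}\mathbf{Cat}$ such that $G$ acts freely on both $C$ and $D$. Then the induced functor of orbit categories $f/G\colon C/G\to D/G$ is an $\mathcal F$-equivalence in $M\text{-}\mathbf{Cat}$.
   Context: A categorical monoid is a strict monoidal category; $M\text{-}\mathbf{Cat}$ denotes small categories with strict $M$-action. A family of finite subgroups is a collection closed under subgroups and conjugation. For a subgroup $H$ and an $M$-category $C$, $C^H$ is the subcategory of $H$-fixed objects and morphisms; a map $f$ is an $\mathcal F$-equivalence if $f^H$ is an equivalence of categories for all $H\in\mathcal F$. $\mathcal G_{\mathcal F,G}$ is the collection of graph subgroups $\Gamma_{H,\phi}=\{(h,\phi(h)):h\in H\}\subset \mathrm{Ob}(M)\times G$ with $H\in\mathcal F$ and $\phi\colon H\to G$ a homomorphism. $G$ acts freely on a category if it acts freely on its set of objects (hence on morphisms). $C/G$ denotes the quotient (colimit) in $\mathbf{Cat}$ with the induced $M$-action. *)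

(* Defs.v *)
(* Categories are small, presented by a type of
   objects, a type of morphisms, source/target/identity and a total composition
   function whose laws are required only on composable pairs. *)
From Stdlib Require Import List ClassicalEpsilon ProofIrrelevance.

Set Implicit Arguments.

(* comp g f  is  g o f, meaningful when tgt f = src g *)
Record Category : Type := {
  Ob : Type;
  Mor : Type;
  src : Mor -> Ob;
  tgt : Mor -> Ob;
  idm : Ob -> Mor;
  comp : Mor -> Mor -> Mor;
  src_idm : forall x, src (idm x) = x;
  tgt_idm : forall x, tgt (idm x) = x;
  src_comp : forall f g, tgt f = src g -> src (comp g f) = src f;
  tgt_comp : forall f g, tgt f = src g -> tgt (comp g f) = tgt g;
  comp_idl : forall f, comp (idm (tgt f)) f = f;
  comp_idr : forall f, comp f (idm (src f)) = f;
  comp_assoc : forall f g h, tgt f = src g -> tgt g = src h ->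
      comp h (comp g f) = comp (comp h g) f }.
Arguments src {c} _. Arguments tgt {c} _. Arguments idm {c} _. Arguments comp {c} _ _.

Record Functor (C D : Category) : Type := {
  fob : Ob C -> Ob D;
  fmor : Mor C -> Mor D;
  f_src : forall u, src (fmor u) = fob (src u);
  f_tgt : forall u, tgt (fmor u) = fob (tgt u);
  f_idm : forall x, fmor (idm x) = idm (fob x);
  f_comp : forall u v, tgt u = src v -> fmor (comp v u) = comp (fmor v) (fmor u) }.
Arguments fob {C D} _ _. Arguments fmor {C D} _ _.

Definition nat_iso {C D : Category} (Fo Go : Ob C -> Ob D) (Fm Gm : Mor C -> Mor D) : Prop :=
  exists (al be : Ob C -> Mor D),
    (forall x, src (al x) = Fo x /\ tgt (al x) = Go x /\
               src (be x) = Go x /\ tgt (be x) = Fo x /\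
               comp (be x) (al x) = idm (Fo x) /\ comp (al x) (be x) = idm (Go x)) /\
    (forall u, comp (al (tgt u)) (Fm u) = comp (Gm u) (al (src u))).

Definition is_equivalence {C D : Category} (F : Functor C D) : Prop :=
  exists K : Functor D C,
    nat_iso (fun x => x) (fun x => fob K (fob F x))
            (fun u => u) (fun u => fmor K (fmor F u)) /\
    nat_iso (fun y => fob F (fob K y)) (fun y => y)
            (fun v => fmor F (fmor K v)) (fun v => v).

Record CatMonoid : Type := {
  mcat : Category;
  tens : Ob mcat -> Ob mcat -> Ob mcat;
  tensm : Mor mcat -> Mor mcat -> Mor mcat;
  munit : Ob mcat;
  src_tensm : forall a b, src (tensm a b) = tens (src a) (src b);
  tgt_tensm : forall a b, tgt (tensm a b) = tens (tgt a) (tgt b);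
  tensm_idm : forall x y, tensm (idm x) (idm y) = idm (tens x y);
  tensm_comp : forall a a' b b', tgt a = src a' -> tgt b = src b' ->
      tensm (comp a' a) (comp b' b) = comp (tensm a' b') (tensm a b);
  tens_assoc : forall x y z, tens (tens x y) z = tens x (tens y z);
  tensm_assoc : forall a b c, tensm (tensm a b) c = tensm a (tensm b c);
  tens_unitl : forall x, tens munit x = x;
  tens_unitr : forall x, tens x munit = x;
  tensm_unitl : forall a, tensm (idm munit) a = a;
  tensm_unitr : forall a, tensm a (idm munit) = a }.
Arguments tens {_} _ _. Arguments tensm {_} _ _.

Record MAction (M : CatMonoid) (C : Category) : Type := {
  aob : Ob (mcat M) -> Ob C -> Ob C;
  amor : Mor (mcat M) -> Mor C -> Mor C;
  src_amor : forall a u, src (amor a u) = aob (src a) (src u);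
  tgt_amor : forall a u, tgt (amor a u) = aob (tgt a) (tgt u);
  amor_idm : forall m x, amor (idm m) (idm x) = idm (aob m x);
  amor_comp : forall a a' u u', tgt a = src a' -> tgt u = src u' ->
      amor (comp a' a) (comp u' u) = comp (amor a' u') (amor a u);
  aob_tens : forall m n x, aob (tens m n) x = aob m (aob n x);
  amor_tens : forall a b u, amor (tensm a b) u = amor a (amor b u);
  aob_unit : forall x, aob (munit M) x = x;
  amor_unit : forall u, amor (idm (munit M)) u = u }.
Arguments aob {M C} _ _ _. Arguments amor {M C} _ _ _.

Definition Equivariant {M : CatMonoid} {C D : Category}
  (A : MAction M C) (B : MAction M D) (f : Functor C D) : Prop :=
  (forall m x, fob f (aob A m x) = aob B m (fob f x)) /\
  (forall a u, fmor f (amor A a u) = amor B a (fmor f u)).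

Lemma sig_eq {T : Type} (P : T -> Prop) (a b : {x | P x}) :
  proj1_sig a = proj1_sig b -> a = b.
Proof.
  destruct a as [a pa], b as [b pb]; simpl; intros ->.
  f_equal; apply proof_irrelevance.
Qed.

Section Fix.
Variables (M : CatMonoid) (C : Category) (A : MAction M C) (K : Ob (mcat M) -> Prop).

Definition fixob (x : Ob C) := forall k, K k -> aob A k x = x.
Definition fixmor (u : Mor C) := forall k, K k -> amor A (idm k) u = u.

Lemma fix_src u : fixmor u -> fixob (src u).
Proof.
  intros H k Hk. rewrite <- (src_idm _ k) at 1. rewrite <- src_amor. now rewrite H.
Qed.
Lemma fix_tgt u : fixmor u -> fixob (tgt u).
Proof.
  intros H k Hk. rewrite <- (tgt_idm _ k) at 1. rewrite <- tgt_amor. now rewrite H.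
Qed.
Lemma fix_idm x : fixob x -> fixmor (idm x).
Proof. intros H k Hk. now rewrite amor_idm, H. Qed.
Lemma fix_comp u v : tgt u = src v -> fixmor u -> fixmor v -> fixmor (comp v u).
Proof.
  intros e Hu Hv k Hk.
  rewrite <- (comp_idl _ (idm k)), tgt_idm.
  rewrite amor_comp by (rewrite ?tgt_idm, ?src_idm; auto).
  now rewrite Hu, Hv.
Qed.

Definition FOb := {x | fixob x}.
Definition FMor := {u | fixmor u}.
Definition fsrc (u : FMor) : FOb := exist _ _ (fix_src (proj2_sig u)).
Definition ftgt (u : FMor) : FOb := exist _ _ (fix_tgt (proj2_sig u)).
Definition fidm (x : FOb) : FMor := exist _ _ (fix_idm (proj2_sig x)).
Definition fcomp (v u : FMor) : FMor :=
  match excluded_middle_informative (fixmor (comp (proj1_sig v) (proj1_sig u))) with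
  | left p => exist _ _ p
  | right _ => v
  end.

Lemma fcomp_val (u v : FMor) : ftgt u = fsrc v ->
  proj1_sig (fcomp v u) = comp (proj1_sig v) (proj1_sig u).
Proof.
  intros e. assert (e' : tgt (proj1_sig u) = src (proj1_sig v))
    by exact (f_equal (@proj1_sig _ _) e).
  unfold fcomp. destruct excluded_middle_informative as [p|n]; auto.
  exfalso; apply n, fix_comp; auto; apply proj2_sig.
Qed.

Definition FixCat : Category.
Proof.
  refine {| Ob := FOb; Mor := FMor; src := fsrc; tgt := ftgt; idm := fidm; comp := fcomp |}.
  - intros x; apply sig_eq; simpl; apply src_idm.
  - intros x; apply sig_eq; simpl; apply tgt_idm.
  - intros f g e; apply sig_eq; simpl; rewrite fcomp_val by auto;
      apply src_comp; exact (f_equal (@proj1_sig _ _) e).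
  - intros f g e; apply sig_eq; simpl; rewrite fcomp_val by auto;
      apply tgt_comp; exact (f_equal (@proj1_sig _ _) e).
  - intros f; apply sig_eq; rewrite fcomp_val by (apply sig_eq; simpl; now rewrite src_idm);
      simpl; apply comp_idl.
  - intros f; apply sig_eq; rewrite fcomp_val by (apply sig_eq; simpl; now rewrite tgt_idm);
      simpl; apply comp_idr.
  - intros f g h e1 e2. apply sig_eq.
    assert (e1' := f_equal (@proj1_sig _ _) e1). assert (e2' := f_equal (@proj1_sig _ _) e2).
    simpl in e1', e2'.
    assert (c1 : ftgt (fcomp g f) = fsrc h).
    { apply sig_eq; simpl. rewrite fcomp_val by auto. now rewrite tgt_comp. }
    assert (c2 : ftgt f = fsrc (fcomp h g)).
    { apply sig_eq; simpl. rewrite fcomp_val by auto. now rewrite src_comp. }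
    rewrite (fcomp_val c1), (fcomp_val c2), (fcomp_val e1), (fcomp_val e2).
    apply comp_assoc; auto.
Defined.
End Fix.

Definition fix_functor {M : CatMonoid} {C D : Category}
  {A : MAction M C} {B : MAction M D} {f : Functor C D}
  (e : Equivariant A B f) (K : Ob (mcat M) -> Prop) :
  Functor (FixCat A K) (FixCat B K).
Proof.
  pose proof (proj1 e) as eo. pose proof (proj2 e) as em.
  unshelve refine (Build_Functor (FixCat A K) (FixCat B K)
     (fun x : FOb A K => exist _ (fob f (proj1_sig x)) _ : FOb B K)
     (fun u : FMor A K => exist _ (fmor f (proj1_sig u)) _ : FMor B K) _ _ _ _).
  - intros k Hk. rewrite <- eo. now rewrite (proj2_sig x k Hk).
  - intros k Hk. rewrite <- em. now rewrite (proj2_sig u k Hk).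
  - intros u; apply sig_eq; simpl; apply f_src.
  - intros u; apply sig_eq; simpl; apply f_tgt.
  - intros x; apply sig_eq; simpl; apply f_idm.
  - intros u v h. assert (h' := f_equal (@proj1_sig _ _) h). simpl in h'.
    apply sig_eq. simpl. rewrite !fcomp_val; simpl; auto.
    + now apply f_comp.
    + apply sig_eq; simpl. now rewrite f_tgt, f_src, h'.
Defined.

Definition K_equivalence {M : CatMonoid} {C D : Category}
  (A : MAction M C) (B : MAction M D) (f : Functor C D) (K : Ob (mcat M) -> Prop) : Prop :=
  exists e : Equivariant A B f, is_equivalence (fix_functor e K).

Record Group : Type := {
  gcar : Type;
  gmul : gcar -> gcar -> gcar;
  gone : gcar;
  ginv : gcar -> gcar;
  gmulA : forall x y z, gmul x (gmul y z) = gmul (gmul x y) z;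
  gmul1l : forall x, gmul gone x = x;
  gmul1r : forall x, gmul x gone = x;
  gmulVl : forall x, gmul (ginv x) x = gone;
  gmulVr : forall x, gmul x (ginv x) = gone }.
Arguments gmul {_} _ _. Arguments gone {_}. Arguments ginv {_} _.

Section Prod.
Variables (M : CatMonoid) (G : Group).
Let MC := mcat M.

Definition ProdCat : Category.
Proof.
  refine {| Ob := Ob MC * gcar G; Mor := Mor MC * gcar G;
            src := fun p => (src (fst p), snd p); tgt := fun p => (tgt (fst p), snd p);
            idm := fun o => (idm (fst o), snd o);
            comp := fun q p => (comp (fst q) (fst p), snd p) |};
  intros; repeat match goal with p : _ * _ |- _ => destruct p end; simpl in *;
  repeat match goal with H : (_, _) = (_, _) |- _ => injection H; clear H; intros end;
  subst; f_equal; auto using src_idm, tgt_idm, src_comp, tgt_comp, comp_idl, comp_idr, comp_assoc.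
Defined.

(* the categorical monoid M x G, with G viewed as a discrete categorical monoid *)
Definition ProdMG : CatMonoid.
Proof.
  refine {| mcat := ProdCat;
            tens := fun (o o' : Ob MC * gcar G) => (tens (fst o) (fst o'), gmul (snd o) (snd o'));
            tensm := fun (a b : Mor MC * gcar G) => (tensm (fst a) (fst b), gmul (snd a) (snd b));
            munit := (munit M, gone) |};
  intros; repeat match goal with p : _ * _ |- _ => destruct p end; simpl in *;
  repeat match goal with H : (_, _) = (_, _) |- _ => injection H; clear H; intros end;
  subst; f_equal;
  first [ solve [auto using src_tensm, tgt_tensm, tensm_idm, tensm_comp, tens_assoc,
    tensm_assoc, tens_unitl, tens_unitr, tensm_unitl, tensm_unitr, gmul1l, gmul1r]
        | solve [symmetry; auto using src_tensm, tgt_tensm, tensm_idm, tensm_comp, tens_assoc,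
    tensm_assoc, tens_unitl, tens_unitr, tensm_unitl, tensm_unitr, gmul1l, gmul1r, gmulA]
        | idtac ].
  all: try apply src_tensm; try apply tgt_tensm.
  all: match goal with |- (_, _) = ?p => destruct p; simpl; f_equal;
         auto using tens_unitl, tens_unitr, tensm_unitl, tensm_unitr, gmul1l, gmul1r end.
Defined.
End Prod.

Section MG.
Variables (M : CatMonoid) (G : Group) (C : Category) (A : MAction (ProdMG M G) C).

Definition g_ob (g : gcar G) (x : Ob C) : Ob C := aob A ((munit M, g) : Ob (mcat (ProdMG M G))) x.
Definition g_mor (g : gcar G) (u : Mor C) : Mor C :=
  amor A ((idm (munit M), g) : Mor (mcat (ProdMG M G))) u.
Definition m_ob (m : Ob (mcat M)) (x : Ob C) : Ob C := aob A ((m, gone) : Ob (mcat (ProdMG M G))) x.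
Definition m_mor (a : Mor (mcat M)) (u : Mor C) : Mor C :=
  amor A ((a, gone) : Mor (mcat (ProdMG M G))) u.

Definition free_action : Prop := forall g x, g_ob g x = x -> g = gone.

(* q : C -> Q exhibits Q as the quotient (colimit in Cat) C/G *)
Definition is_orbit_quotient (Q : Category) (q : Functor C Q) : Prop :=
  (forall g x, fob q (g_ob g x) = fob q x) /\
  (forall g u, fmor q (g_mor g u) = fmor q u) /\
  forall (E : Category) (h : Functor C E),
    (forall g x, fob h (g_ob g x) = fob h x) ->
    (forall g u, fmor h (g_mor g u) = fmor h u) ->
    exists k : Functor Q E,
      (forall x, fob k (fob q x) = fob h x) /\ (forall u, fmor k (fmor q u) = fmor h u) /\
      forall k' : Functor Q E,
        (forall x, fob k' (fob q x) = fob h x) -> (forall u, fmor k' (fmor q u) = fmor h u) ->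
        (forall y, fob k' y = fob k y) /\ (forall v, fmor k' v = fmor k v).

Definition induced_action (Q : Category) (q : Functor C Q) (AQ : MAction M Q) : Prop :=
  (forall m x, fob q (m_ob m x) = aob AQ m (fob q x)) /\
  (forall a u, fmor q (m_mor a u) = amor AQ a (fmor q u)).
End MG.

Definition is_subgroup (M : CatMonoid) (H : Ob (mcat M) -> Prop) : Prop :=
  H (munit M) /\ (forall h h', H h -> H h' -> H (tens h h')) /\
  (forall h, H h -> exists h', H h' /\ tens h h' = munit M /\ tens h' h = munit M).

Arguments is_subgroup {M} H.

Definition is_finite_set {T : Type} (H : T -> Prop) : Prop :=
  exists l : list T, forall x, H x -> In x l.

Definition is_family (M : CatMonoid) (F : (Ob (mcat M) -> Prop) -> Prop) : Prop :=
  (forall H, F H -> is_subgroup H /\ is_finite_set H) /\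
  (forall H K, F H -> is_subgroup K -> (forall x, K x -> H x) -> F K) /\
  (forall H u u', F H -> tens u u' = munit M -> tens u' u = munit M ->
     F (fun x => exists h, H h /\ x = tens (tens u h) u')).

Definition group_hom_on (M : CatMonoid) (G : Group) (H : Ob (mcat M) -> Prop)
  (phi : Ob (mcat M) -> gcar G) : Prop :=
  forall h h', H h -> H h' -> phi (tens h h') = gmul (phi h) (phi h').

Definition graph_subgroup (M : CatMonoid) (G : Group) (H : Ob (mcat M) -> Prop)
  (phi : Ob (mcat M) -> gcar G) : Ob (mcat (ProdMG M G)) -> Prop :=
  fun p => H (fst p) /\ snd p = phi (fst p).

Arguments is_family {M} F.
Arguments group_hom_on {M G} H phi.
Arguments graph_subgroup {M G} H phi _.
Arguments free_action {M G C} A.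
Arguments is_orbit_quotient {M G C} A {Q} q.
Arguments induced_action {M G C} A {Q} q AQ.

(* Main.v *)
Require Import Defs.
From Stdlib Require Import ClassicalEpsilon ProofIrrelevance Classical FunctionalExtensionality PropExtensionality.

Lemma my_choice {A B : Type} (R : A -> B -> Prop) :
  (forall a, exists b, R a b) -> exists f : A -> B, forall a, R a (f a).
Proof.
  intros H. exists (fun a => proj1_sig (constructive_indefinite_description _ (H a))).
  intro a. exact (proj2_sig (constructive_indefinite_description _ (H a))).
Qed.

Ltac st_with t := repeat progress (first
  [ rewrite src_comp by st_with t | rewrite tgt_comp by st_with t | rewrite src_idm | rewrite tgt_idm
  | rewrite f_src | rewrite f_tgt | t ]); try congruence.
Ltac rassoc t := repeat (rewrite <- comp_assoc by st_with t).

Lemma cancel_l {C : Category} (a b y : Mor C) :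
  tgt y = src b -> tgt b = src a -> comp a b = idm (tgt y) -> comp a (comp b y) = y.
Proof. intros h1 h2 h3. rewrite comp_assoc by auto. rewrite h3. apply comp_idl. Qed.

Lemma equiv_of_ffes {C D : Category} (F : Functor C D) :
 (forall y, exists x a b, src a = fob F x /\ tgt a = y /\ src b = y /\ tgt b = fob F x /\
      comp b a = idm (fob F x) /\ comp a b = idm y) ->
 (forall u u', src u = src u' -> tgt u = tgt u' -> fmor F u = fmor F u' -> u = u') ->
 (forall x x' v, src v = fob F x -> tgt v = fob F x' ->
      exists u, src u = x /\ tgt u = x' /\ fmor F u = v) ->
 is_equivalence F.
Proof.
  intros ES FF FU.
  assert (ES' : forall y, exists p : Ob C * (Mor D * Mor D),
    src (fst (snd p)) = fob F (fst p) /\ tgt (fst (snd p)) = y /\ src (snd (snd p)) = y /\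
    tgt (snd (snd p)) = fob F (fst p) /\
    comp (snd (snd p)) (fst (snd p)) = idm (fob F (fst p)) /\ comp (fst (snd p)) (snd (snd p)) = idm y).
  { intros y. destruct (ES y) as (x & a & b & H). exists (x, (a, b)). exact H. }
  destruct (my_choice _ ES') as [pk Hpk].
  set (Ko := fun y => fst (pk y)). set (al := fun y => fst (snd (pk y))).
  set (be := fun y => snd (snd (pk y))).
  assert (Hal1 : forall y, src (al y) = fob F (Ko y)) by (intro y; apply (Hpk y)).
  assert (Hal2 : forall y, tgt (al y) = y) by (intro y; apply (Hpk y)).
  assert (Hbe1 : forall y, src (be y) = y) by (intro y; apply (Hpk y)).
  assert (Hbe2 : forall y, tgt (be y) = fob F (Ko y)) by (intro y; apply (Hpk y)).
  assert (Hba : forall y, comp (be y) (al y) = idm (fob F (Ko y))) by (intro y; apply (Hpk y)).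
  assert (Hab : forall y, comp (al y) (be y) = idm y) by (intro y; apply (Hpk y)).
  clearbody Ko al be. clear Hpk ES' ES.
  assert (FU' : forall p : Ob C * Ob C * Mor D, exists u,
     src (snd p) = fob F (fst (fst p)) -> tgt (snd p) = fob F (snd (fst p)) ->
     src u = fst (fst p) /\ tgt u = snd (fst p) /\ fmor F u = snd p).
  { intros [[x x'] v]; simpl.
    destruct (classic (src v = fob F x /\ tgt v = fob F x')) as [[h1 h2]|n].
    - destruct (FU x x' v h1 h2) as [u Hu]. exists u; auto.
    - exists (idm x). intros h1 h2; exfalso; auto. }
  destruct (my_choice _ FU') as [lf Hlf].
  set (lift := fun x x' v => lf (x, x', v)).
  assert (Hlift : forall x x' v, src v = fob F x -> tgt v = fob F x' ->
     src (lift x x' v) = x /\ tgt (lift x x' v) = x' /\ fmor F (lift x x' v) = v).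
  { intros x x' v; exact (Hlf (x, x', v)). }
  clearbody lift. clear Hlf FU' FU.
  set (w := fun v => comp (be (tgt v)) (comp v (al (src v)))).
  assert (Hw1 : forall v, src (w v) = fob F (Ko (src v))).
  { intro v; unfold w. rewrite src_comp, src_comp; auto. rewrite tgt_comp; rewrite ?Hal2; auto. }
  assert (Hw2 : forall v, tgt (w v) = fob F (Ko (tgt v))).
  { intro v; unfold w. rewrite tgt_comp; auto. rewrite tgt_comp; rewrite ?Hal2; auto. }
  set (Km := fun v => lift (Ko (src v)) (Ko (tgt v)) (w v)).
  assert (HK : forall v, src (Km v) = Ko (src v) /\ tgt (Km v) = Ko (tgt v) /\ fmor F (Km v) = w v).
  { intro v. apply Hlift; auto. }
  clearbody Km.
  assert (Kfunc : { K : Functor D C | (forall y, fob K y = Ko y) /\ (forall v, fmor K v = Km v) }).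
  { unshelve eexists (Build_Functor D C Ko Km _ _ _ _).
    - intro; apply HK.
    - intro; apply HK.
    - intro y. apply FF.
      + rewrite (proj1 (HK _)). rewrite src_idm, src_idm. reflexivity.
      + rewrite (proj1 (proj2 (HK _))). rewrite tgt_idm, tgt_idm. reflexivity.
      + rewrite (proj2 (proj2 (HK _))), f_idm. unfold w. rewrite src_idm, tgt_idm.
        rewrite <- (Hal2 y) at 2. rewrite comp_idl. apply Hba.
    - intros u v e.
      pose proof (HK u) as [Hu1 [Hu2 Hu3]]. pose proof (HK v) as [Hv1 [Hv2 Hv3]].
      pose proof (HK (comp v u)) as [Hc1 [Hc2 Hc3]].
      apply FF.
      + st_with ltac:(first [rewrite Hc1 | rewrite Hu1 | rewrite Hu2 | rewrite Hv1 | rewrite Hv2]).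
      + st_with ltac:(first [rewrite Hc2 | rewrite Hu1 | rewrite Hu2 | rewrite Hv1 | rewrite Hv2]).
      + rewrite f_comp by congruence. rewrite Hc3, Hu3, Hv3. unfold w.
        rewrite src_comp, tgt_comp by congruence. rewrite <- e.
        rassoc ltac:(first [rewrite Hal1 | rewrite Hal2 | rewrite Hbe1 | rewrite Hbe2]).
        rewrite (cancel_l (al (tgt u))); auto; st_with ltac:(first [rewrite Hal1 | rewrite Hal2 | rewrite Hbe1 | rewrite Hbe2]).
    - split; reflexivity. }
  destruct Kfunc as [K [HKo HKm]]. exists K.
  assert (HL := fun x x' v h1 h2 => proj1 (Hlift x x' v h1 h2)).
  assert (HL2 := fun x x' v h1 h2 => proj1 (proj2 (Hlift x x' v h1 h2))).
  assert (HL3 := fun x x' v h1 h2 => proj2 (proj2 (Hlift x x' v h1 h2))).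
  split.
  - exists (fun x => lift x (Ko (fob F x)) (be (fob F x))).
    exists (fun x => lift (Ko (fob F x)) x (al (fob F x))).
    split; [intro x | intro u]; rewrite ?HKo, ?HKm.
    + assert (e1 : src (lift x (Ko (fob F x)) (be (fob F x))) = x) by (apply HL; auto).
      assert (e2 : tgt (lift x (Ko (fob F x)) (be (fob F x))) = Ko (fob F x)) by (apply HL2; auto).
      assert (e3 : fmor F (lift x (Ko (fob F x)) (be (fob F x))) = be (fob F x)) by (apply HL3; auto).
      assert (e4 : src (lift (Ko (fob F x)) x (al (fob F x))) = Ko (fob F x)) by (apply HL; auto).
      assert (e5 : tgt (lift (Ko (fob F x)) x (al (fob F x))) = x) by (apply HL2; auto).
      assert (e6 : fmor F (lift (Ko (fob F x)) x (al (fob F x))) = al (fob F x)) by (apply HL3; auto).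
      repeat split; auto.
      * apply FF; st_with ltac:(first [rewrite e1|rewrite e2|rewrite e4|rewrite e5]).
        rewrite f_comp by congruence. rewrite e3, e6, f_idm. apply Hab.
      * apply FF; st_with ltac:(first [rewrite e1|rewrite e2|rewrite e4|rewrite e5]).
        rewrite f_comp by congruence. rewrite e3, e6, f_idm. apply Hba.
    + pose proof (HK (fmor F u)) as [Hu1 [Hu2 Hu3]].
      rewrite f_src in Hu1. rewrite f_tgt in Hu2.
      remember (tgt u) as t eqn:Et. remember (src u) as s eqn:Es.
      assert (e1 : src (lift t (Ko (fob F t)) (be (fob F t))) = t) by (apply HL; auto).
      assert (e2 : tgt (lift t (Ko (fob F t)) (be (fob F t))) = Ko (fob F t)) by (apply HL2; auto).
      assert (e3 : fmor F (lift t (Ko (fob F t)) (be (fob F t))) = be (fob F t)) by (apply HL3; auto).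
      assert (e1' : src (lift s (Ko (fob F s)) (be (fob F s))) = s) by (apply HL; auto).
      assert (e2' : tgt (lift s (Ko (fob F s)) (be (fob F s))) = Ko (fob F s)) by (apply HL2; auto).
      assert (e3' : fmor F (lift s (Ko (fob F s)) (be (fob F s))) = be (fob F s)) by (apply HL3; auto).
      apply FF; st_with ltac:(first [rewrite e1|rewrite e2|rewrite e1'|rewrite e2'|rewrite Hu1|rewrite Hu2]).
      rewrite !f_comp by st_with ltac:(first [rewrite e1|rewrite e2|rewrite e1'|rewrite e2'|rewrite Hu1|rewrite Hu2]).
      rewrite e3, e3', Hu3. unfold w. rewrite f_src, f_tgt. rewrite <- Et, <- Es.
      rassoc ltac:(first [rewrite Hal1 | rewrite Hal2 | rewrite Hbe1 | rewrite Hbe2]).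
      f_equal. rewrite Hab. subst s. rewrite <- (f_src F u). symmetry. apply comp_idr.
  - exists al, be. split; [intro y | intro v]; rewrite ?HKo, ?HKm.
    + repeat split; auto.
    + pose proof (HK v) as [Hv1 [Hv2 Hv3]]. rewrite Hv3. unfold w.
      rewrite (cancel_l (al (tgt v))); st_with ltac:(first [rewrite Hal1 | rewrite Hal2 | rewrite Hbe1 | rewrite Hbe2]).
Qed.

Lemma equiv_es {C D : Category} (F : Functor C D) : is_equivalence F ->
 forall y, exists x a b, src a = fob F x /\ tgt a = y /\ src b = y /\ tgt b = fob F x /\
      comp b a = idm (fob F x) /\ comp a b = idm y.
Proof.
  intros [K [_ [al [be [H1 H2]]]]] y. exists (fob K y), (al y), (be y). apply H1.
Qed.

Lemma equiv_faithful {C D : Category} (F : Functor C D) : is_equivalence F ->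
 forall u u', src u = src u' -> tgt u = tgt u' -> fmor F u = fmor F u' -> u = u'.
Proof.
  intros [K [[al [be [H1 H2]]] _]] u u' es et ef.
  assert (key : forall u, u = comp (be (tgt u)) (comp (fmor K (fmor F u)) (al (src u)))).
  { intro w. rewrite <- H2. rewrite comp_assoc.
    - destruct (H1 (tgt w)) as (a1 & a2 & a3 & a4 & a5 & a6). rewrite a5. symmetry; apply comp_idl.
    - destruct (H1 (tgt w)) as (a1 & a2 & a3 & a4 & a5 & a6). congruence.
    - destruct (H1 (tgt w)) as (a1 & a2 & a3 & a4 & a5 & a6). congruence. }
  rewrite (key u), (key u'). congruence.
Qed.

Lemma equiv_full {C D : Category} (F : Functor C D) : is_equivalence F ->
 forall x x' v, src v = fob F x -> tgt v = fob F x' ->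
      exists u, src u = x /\ tgt u = x' /\ fmor F u = v.
Proof.
  intros [K [[al [be [H1 H2]]] [al2 [be2 [H3 H4]]]]] x x' v hs ht.
  assert (Kf : forall v1 v2, src v1 = src v2 -> tgt v1 = tgt v2 -> fmor K v1 = fmor K v2 -> v1 = v2).
  { assert (key : forall v, v = comp (comp (al2 (tgt v)) (fmor F (fmor K v))) (be2 (src v))).
    { intro w. rewrite H4. destruct (H3 (src w)) as (a1 & a2 & a3 & a4 & a5 & a6).
      rewrite <- comp_assoc by congruence. rewrite a6. symmetry; apply comp_idr. }
    intros v1 v2 e1 e2 e3. rewrite (key v1), (key v2). congruence. }
  destruct (H1 x) as (b1 & b2 & b3 & b4 & b5 & b6).
  destruct (H1 x') as (c1 & c2 & c3 & c4 & c5 & c6).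
  exists (comp (be x') (comp (fmor K v) (al x))).
  assert (s1 : src (comp (fmor K v) (al x)) = x).
  { rewrite src_comp; auto. rewrite f_src, hs. auto. }
  assert (t1 : tgt (comp (fmor K v) (al x)) = fob K (fob F x')).
  { rewrite tgt_comp. rewrite f_tgt, ht. auto. rewrite f_src, hs. auto. }
  split; [|split].
  - rewrite src_comp; congruence.
  - rewrite tgt_comp; congruence.
  - set (u := comp (be x') (comp (fmor K v) (al x))).
    assert (us : src u = x) by (unfold u; rewrite src_comp; congruence).
    assert (ut : tgt u = x') by (unfold u; rewrite tgt_comp; congruence).
    apply Kf; [rewrite f_src, us; auto | rewrite f_tgt, ut; auto |].
    assert (N := H2 u). rewrite us, ut in N.
    assert (e : comp (al x') u = comp (fmor K v) (al x)).
    { unfold u. rewrite cancel_l; auto; congruence. }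
    rewrite e in N.
    assert (E : fmor K (fmor F u) = comp (comp (fmor K (fmor F u)) (al x)) (be x)).
    { rewrite <- comp_assoc by (rewrite ?f_src, ?f_tgt, ?us; congruence).
      rewrite b6. replace (fob K (fob F x)) with (src (fmor K (fmor F u))) by (rewrite f_src, f_src, us; auto). symmetry; apply comp_idr. }
    rewrite E, <- N. rewrite <- comp_assoc by (rewrite ?f_src, ?hs; congruence). rewrite b6.
    replace (fob K (fob F x)) with (src (fmor K v)) by (rewrite f_src, hs; auto). apply comp_idr.
Qed.

Lemma pext {T : Type} (P Q : T -> Prop) : (forall x, P x <-> Q x) -> P = Q.
Proof. intros H. apply functional_extensionality; intro x; apply propositional_extensionality; auto. Qed.

Definition PCat (C : Category) : Category.
Proof.
  refine {| Ob := Ob C -> Prop; Mor := Mor C -> Prop;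
    src := fun S x => exists u, S u /\ x = src u;
    tgt := fun S x => exists u, S u /\ x = tgt u;
    idm := fun X u => exists x, X x /\ u = idm x;
    comp := fun T S w => exists v u, T v /\ S u /\ tgt u = src v /\ w = comp v u |}.
  - intros X; apply pext; intro x; split.
    + intros (u & (y & Hy & ->) & ->). now rewrite src_idm.
    + intros Hx. exists (idm x); split; [exists x; auto | now rewrite src_idm].
  - intros X; apply pext; intro x; split.
    + intros (u & (y & Hy & ->) & ->). now rewrite tgt_idm.
    + intros Hx. exists (idm x); split; [exists x; auto | now rewrite tgt_idm].
  - intros S T e; apply pext; intro x; split.
    + intros (w & (v & u & Hv & Hu & e' & ->) & ->). exists u; split; auto. now apply src_comp.
    + intros (u & Hu & ->).
      assert (h : (fun x => exists u, S u /\ x = tgt u) (tgt u)) by (exists u; auto).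
      rewrite e in h. destruct h as (v & Hv & ev).
      exists (comp v u); split. exists v, u; auto. symmetry; now apply src_comp.
  - intros S T e; apply pext; intro x; split.
    + intros (w & (v & u & Hv & Hu & e' & ->) & ->). exists v; split; auto. now apply tgt_comp.
    + intros (v & Hv & ->).
      assert (h : (fun x => exists v, T v /\ x = src v) (src v)) by (exists v; auto).
      rewrite <- e in h. destruct h as (u & Hu & eu).
      exists (comp v u); split. exists v, u; auto. symmetry; now apply tgt_comp.
  - intros S; apply pext; intro w; split.
    + intros (v & u & (x & (u' & Hu' & ->) & ->) & Hu & e & ->).
      rewrite src_idm in e. rewrite <- e. now rewrite comp_idl.
    + intros Hw. exists (idm (tgt w)), w. repeat split; auto.
      exists (tgt w); split; eauto. now rewrite src_idm.
      now rewrite comp_idl.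
  - intros S; apply pext; intro w; split.
    + intros (v & u & Hv & (x & (u' & Hu' & ->) & ->) & e & ->).
      rewrite tgt_idm in e. rewrite e. now rewrite comp_idr.
    + intros Hw. exists w, (idm (src w)). repeat split; auto.
      exists (src w); split; eauto. now rewrite tgt_idm.
      now rewrite comp_idr.
  - intros S T U _ _; apply pext; intro r; split.
    + intros (w & z & Hw & (v & u & Hv & Hu & e1 & ->) & e2 & ->).
      rewrite tgt_comp in e2 by auto.
      exists (comp w v), u. repeat split; auto.
      exists w, v; auto. rewrite src_comp; auto. now apply comp_assoc.
    + intros (z & u & (w & v & Hw & Hv & e1 & ->) & Hu & e2 & ->).
      rewrite src_comp in e2 by auto.
      exists w, (comp v u). repeat split; auto.
      exists v, u; auto. rewrite tgt_comp; auto. symmetry; now apply comp_assoc.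
Defined.

Definition sub_mor {Q : Category} (Po : Ob Q -> Prop) (Pm : Mor Q -> Prop)
  (hs : forall u, Pm u -> Po (src u)) (ht : forall u, Pm u -> Po (tgt u))
  (hi : forall x, Po x -> Pm (idm x))
  (hc : forall u v, tgt u = src v -> Pm u -> Pm v -> Pm (comp v u)) : Category.
Proof.
  refine {| Ob := {x | Po x}; Mor := {u | Pm u};
    src := fun u => exist _ (src (proj1_sig u)) (hs _ (proj2_sig u));
    tgt := fun u => exist _ (tgt (proj1_sig u)) (ht _ (proj2_sig u));
    idm := fun x => exist _ (idm (proj1_sig x)) (hi _ (proj2_sig x));
    comp := fun v u => match excluded_middle_informative (Pm (comp (proj1_sig v) (proj1_sig u))) with
                       | left p => exist _ _ p | right _ => v end |}.
  all: intros; repeat match goal with p : {_ | _} |- _ => destruct p end; simpl in *.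
  all: repeat match goal with h : exist _ _ _ = exist _ _ _ |- _ =>
         apply (f_equal (@proj1_sig _ _)) in h; simpl in h end.
  all: apply sig_eq; simpl.
  all: repeat (destruct excluded_middle_informative; simpl in *).
  all: try (exfalso; match goal with n : ~ _ |- _ => apply n;
            repeat (apply hc; rewrite ?tgt_idm, ?src_idm, ?src_comp, ?tgt_comp by auto); auto;
            rewrite ?tgt_idm, ?src_idm, ?src_comp, ?tgt_comp; auto; fail end).
  all: auto using src_idm, tgt_idm, src_comp, tgt_comp, comp_idl, comp_idr, comp_assoc.
Defined.
Set Implicit Arguments.

Lemma grp_cancel (G : Group) (a b : gcar G) : gmul (ginv b) a = gone -> a = b.
Proof.
  intros h. rewrite <- (gmul1l G a). rewrite <- (gmulVr G b). rewrite <- gmulA. rewrite h. apply gmul1r.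
Qed.

Lemma g_ob_mul M G C (A : MAction (ProdMG M G) C) a b x :
  g_ob A a (g_ob A b x) = g_ob A (gmul a b) x.
Proof. unfold g_ob. rewrite <- aob_tens. f_equal. simpl. now rewrite tens_unitl. Qed.

Lemma g_ob_one M G C (A : MAction (ProdMG M G) C) x : g_ob A gone x = x.
Proof. unfold g_ob. exact (aob_unit A x). Qed.

Lemma g_mor_mul M G C (A : MAction (ProdMG M G) C) a b u :
  g_mor A a (g_mor A b u) = g_mor A (gmul a b) u.
Proof. unfold g_mor. rewrite <- amor_tens. f_equal. simpl. now rewrite tensm_unitl. Qed.

Lemma g_mor_one M G C (A : MAction (ProdMG M G) C) u : g_mor A gone u = u.
Proof. unfold g_mor. exact (amor_unit A u). Qed.

Lemma src_g_mor M G C (A : MAction (ProdMG M G) C) g u : src (g_mor A g u) = g_ob A g (src u).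
Proof. unfold g_mor, g_ob. rewrite src_amor. simpl. now rewrite src_idm. Qed.

Lemma tgt_g_mor M G C (A : MAction (ProdMG M G) C) g u : tgt (g_mor A g u) = g_ob A g (tgt u).
Proof. unfold g_mor, g_ob. rewrite tgt_amor. simpl. now rewrite tgt_idm. Qed.

Lemma g_mor_idm M G C (A : MAction (ProdMG M G) C) g x : g_mor A g (idm x) = idm (g_ob A g x).
Proof. unfold g_mor, g_ob. exact (amor_idm A (munit M, g) x). Qed.

Lemma g_mor_comp M G C (A : MAction (ProdMG M G) C) g u v : tgt u = src v ->
  g_mor A g (comp v u) = comp (g_mor A g v) (g_mor A g u).
Proof.
  intros e. unfold g_mor. rewrite <- amor_comp; [ | simpl; now rewrite tgt_idm, src_idm | auto ].
  f_equal. simpl. f_equal. rewrite <- (tgt_idm _ (munit M)) at 2. now rewrite comp_idl.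
Qed.

Lemma g_ob_inv M G C (A : MAction (ProdMG M G) C) g x : g_ob A (ginv g) (g_ob A g x) = x.
Proof. now rewrite g_ob_mul, gmulVl, g_ob_one. Qed.
Lemma g_ob_inv' M G C (A : MAction (ProdMG M G) C) g x : g_ob A g (g_ob A (ginv g) x) = x.
Proof. now rewrite g_ob_mul, gmulVr, g_ob_one. Qed.
Lemma g_mor_inv M G C (A : MAction (ProdMG M G) C) g u : g_mor A (ginv g) (g_mor A g u) = u.
Proof. now rewrite g_mor_mul, gmulVl, g_mor_one. Qed.

Lemma free_cancel M G C (A : MAction (ProdMG M G) C) : free_action A ->
  forall a b x, g_ob A a x = g_ob A b x -> a = b.
Proof.
  intros Hf a b x e. apply grp_cancel. apply (Hf _ x).
  rewrite <- g_ob_mul, e. apply g_ob_inv.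
Qed.

Lemma aob_split M G C (A : MAction (ProdMG M G) C) h g x :
  aob A ((h, g) : Ob (mcat (ProdMG M G))) x = g_ob A g (m_ob A h x).
Proof. unfold g_ob, m_ob. rewrite <- aob_tens. f_equal. simpl. now rewrite tens_unitl, gmul1r. Qed.

Lemma amor_split M G C (A : MAction (ProdMG M G) C) a g u :
  amor A ((a, g) : Mor (mcat (ProdMG M G))) u = g_mor A g (m_mor A a u).
Proof. unfold g_mor, m_mor. rewrite <- amor_tens. f_equal. simpl. now rewrite tensm_unitl, gmul1r. Qed.

Lemma gm_comm M G C (A : MAction (ProdMG M G) C) h g x :
  g_ob A g (m_ob A h x) = m_ob A h (g_ob A g x).
Proof. unfold g_ob, m_ob. rewrite <- !aob_tens. f_equal. simpl. now rewrite tens_unitl, tens_unitr, gmul1r, gmul1l. Qed.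

Lemma gm_comm_mor M G C (A : MAction (ProdMG M G) C) a g u :
  g_mor A g (m_mor A a u) = m_mor A a (g_mor A g u).
Proof. unfold g_mor, m_mor. rewrite <- !amor_tens. f_equal. simpl. now rewrite tensm_unitl, tensm_unitr, gmul1r, gmul1l. Qed.

Lemma m_ob_mul M G C (A : MAction (ProdMG M G) C) h h' x :
  m_ob A h (m_ob A h' x) = m_ob A (tens h h') x.
Proof. unfold m_ob. rewrite <- aob_tens. f_equal. simpl. now rewrite gmul1l. Qed.

Lemma src_m_mor M G C (A : MAction (ProdMG M G) C) a u : src (m_mor A a u) = m_ob A (src a) (src u).
Proof. unfold m_mor, m_ob. now rewrite src_amor. Qed.
Lemma tgt_m_mor M G C (A : MAction (ProdMG M G) C) a u : tgt (m_mor A a u) = m_ob A (tgt a) (tgt u).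
Proof. unfold m_mor, m_ob. now rewrite tgt_amor. Qed.

Lemma equiv_g_ob M G C D (A : MAction (ProdMG M G) C) (B : MAction (ProdMG M G) D) f :
  Equivariant A B f -> forall g x, fob f (g_ob A g x) = g_ob B g (fob f x).
Proof. intros [e _] g x. apply e. Qed.
Lemma equiv_g_mor M G C D (A : MAction (ProdMG M G) C) (B : MAction (ProdMG M G) D) f :
  Equivariant A B f -> forall g u, fmor f (g_mor A g u) = g_mor B g (fmor f u).
Proof. intros [_ e] g u. apply e. Qed.
Lemma equiv_m_ob M G C D (A : MAction (ProdMG M G) C) (B : MAction (ProdMG M G) D) f :
  Equivariant A B f -> forall m x, fob f (m_ob A m x) = m_ob B m (fob f x).
Proof. intros [e _] m x. apply e. Qed.
Lemma equiv_m_mor M G C D (A : MAction (ProdMG M G) C) (B : MAction (ProdMG M G) D) f :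
  Equivariant A B f -> forall a u, fmor f (m_mor A a u) = m_mor B a (fmor f u).
Proof. intros [_ e] a u. apply e. Qed.
Set Implicit Arguments.

Definition fid (C : Category) : Functor C C.
Proof. refine (Build_Functor C C (fun x => x) (fun u => u) _ _ _ _); auto. Defined.

Definition fcompose {C D E : Category} (g : Functor D E) (f : Functor C D) : Functor C E.
Proof.
  refine (Build_Functor C E (fun x => fob g (fob f x)) (fun u => fmor g (fmor f u)) _ _ _ _).
  - intro u; now rewrite f_src, f_src.
  - intro u; now rewrite f_tgt, f_tgt.
  - intro x; now rewrite f_idm, f_idm.
  - intros u v e. rewrite f_comp by auto. apply f_comp. now rewrite f_tgt, f_src, e.
Defined.

Lemma orbit_functor M G C (A : MAction (ProdMG M G) C) : free_action A ->
  { h : Functor C (PCat C) | (forall x, fob h x = fun y => exists g, y = g_ob A g x) /\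
                             (forall u, fmor h u = fun w => exists g, w = g_mor A g u) }.
Proof.
  intros Hf.
  unshelve eexists (Build_Functor C (PCat C) (fun x y => exists g, y = g_ob A g x)
                      (fun u w => exists g, w = g_mor A g u) _ _ _ _); [ | | | | split; reflexivity].
  - intro u. simpl. apply pext; intro y; split.
    + intros (w & (g & ->) & ->). exists g. apply src_g_mor.
    + intros (g & ->). exists (g_mor A g u); split; eauto. symmetry; apply src_g_mor.
  - intro u. simpl. apply pext; intro y; split.
    + intros (w & (g & ->) & ->). exists g. apply tgt_g_mor.
    + intros (g & ->). exists (g_mor A g u); split; eauto. symmetry; apply tgt_g_mor.
  - intro x. simpl. apply pext; intro w; split.
    + intros (g & ->). exists (g_ob A g x); split; eauto. apply g_mor_idm.
    + intros (y & (g & ->) & ->). exists g. symmetry; apply g_mor_idm.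
  - intros u v e. simpl. apply pext; intro w; split.
    + intros (g & ->). exists (g_mor A g v), (g_mor A g u). repeat split; eauto.
      rewrite tgt_g_mor, src_g_mor; congruence. apply g_mor_comp; auto.
    + intros (v' & u' & (a & ->) & (b & ->) & e' & ->).
      rewrite tgt_g_mor, src_g_mor, e in e'.
      apply (free_cancel Hf) in e'. subst. exists a. symmetry; apply g_mor_comp; auto.
Defined.

Lemma quot_rel M G C (A : MAction (ProdMG M G) C) Q (q : Functor C Q) :
  free_action A -> is_orbit_quotient A q ->
  (forall x x', fob q x = fob q x' -> exists g, x' = g_ob A g x) /\
  (forall u u', fmor q u = fmor q u' -> exists g, u' = g_mor A g u).
Proof.
  intros Hf [Hq1 [Hq2 Hq3]].
  destruct (orbit_functor Hf) as [h [Ho Hm]].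
  destruct (Hq3 (PCat C) h) as [k [Hk1 [Hk2 _]]].
  - intros g x. rewrite !Ho. apply pext; intro y; split.
    + intros (a & ->). exists (gmul a g). now rewrite g_ob_mul.
    + intros (a & ->). exists (gmul a (ginv g)). now rewrite <- g_ob_mul, g_ob_inv.
  - intros g u. rewrite !Hm. apply pext; intro y; split.
    + intros (a & ->). exists (gmul a g). now rewrite g_mor_mul.
    + intros (a & ->). exists (gmul a (ginv g)). now rewrite <- g_mor_mul, g_mor_inv.
  - split.
    + intros x x' e. assert (E : fob h x = fob h x') by (rewrite <- !Hk1; congruence).
      rewrite !Ho in E. pose proof (equal_f E x') as E'. cbv beta in E'.
      rewrite E'. exists gone. now rewrite g_ob_one.
    + intros u u' e. assert (E : fmor h u = fmor h u') by (rewrite <- !Hk2; congruence).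
      rewrite !Hm in E. pose proof (equal_f E u') as E'. cbv beta in E'.
      rewrite E'. exists gone. now rewrite g_mor_one.
Qed.

Lemma sub_comp_val (Q : Category) (Po : Ob Q -> Prop) (Pm : Mor Q -> Prop) hs ht hi hc
  (u v : Mor (@sub_mor Q Po Pm hs ht hi hc)) :
  tgt u = src v -> proj1_sig (comp v u) = comp (proj1_sig v) (proj1_sig u).
Proof.
  intros e. apply (f_equal (@proj1_sig _ _)) in e. simpl in e. simpl.
  destruct excluded_middle_informative as [p|n]; auto.
  exfalso; apply n, hc; auto; apply proj2_sig.
Qed.

Lemma quot_surj M G C (A : MAction (ProdMG M G) C) Q (q : Functor C Q) :
  free_action A -> is_orbit_quotient A q ->
  (forall y, exists x, fob q x = y) /\ (forall v, exists u, fmor q u = v).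
Proof.
  intros Hf Hq. destruct (quot_rel Hf Hq) as [Ro Rm].
  destruct Hq as [Hq1 [Hq2 Hq3]].
  set (Po := fun y => exists x, fob q x = y). set (Pm := fun v => exists u, fmor q u = v).
  assert (hs : forall v, Pm v -> Po (src v)). { intros v [u <-]. exists (src u). now rewrite f_src. }
  assert (ht : forall v, Pm v -> Po (tgt v)). { intros v [u <-]. exists (tgt u). now rewrite f_tgt. }
  assert (hi : forall y, Po y -> Pm (idm y)). { intros y [x <-]. exists (idm x). now rewrite f_idm. }
  assert (hc : forall u v, tgt u = src v -> Pm u -> Pm v -> Pm (comp v u)).
  { intros v v' e [u <-] [u' <-]. rewrite f_tgt, f_src in e. destruct (Ro _ _ e) as [g eg].
    exists (comp (g_mor A (ginv g) u') u).
    rewrite f_comp. rewrite Hq2. auto. rewrite src_g_mor, eg. now rewrite g_ob_inv. }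
  set (S := sub_mor Po Pm hs ht hi hc).
  unshelve epose (cq := Build_Functor C S (fun x => exist Po (fob q x) (ex_intro _ x eq_refl))
                      (fun u => exist Pm (fmor q u) (ex_intro _ u eq_refl)) _ _ _ _).
  - intro u; apply sig_eq; simpl; apply f_src.
  - intro u; apply sig_eq; simpl; apply f_tgt.
  - intro x; apply sig_eq; simpl; apply f_idm.
  - intros u v e. apply sig_eq. rewrite (@sub_comp_val Q Po Pm hs ht hi hc). simpl. now apply f_comp.
    apply sig_eq; simpl. rewrite f_tgt, f_src. congruence.
  - unshelve epose (incl := Build_Functor S Q (fun y => proj1_sig y) (fun v => proj1_sig v) _ _ _ _).
    + intro; reflexivity.
    + intro; reflexivity.
    + intro; reflexivity.
    + intros u v e. apply sub_comp_val; auto.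
    + destruct (Hq3 S cq) as [k [Hk1 [Hk2 _]]].
      * intros g x; apply sig_eq; simpl; apply Hq1.
      * intros g u; apply sig_eq; simpl; apply Hq2.
      * destruct (Hq3 Q q) as [k0 [_ [_ U]]]; auto.
        destruct (U (fid Q)) as [U1 U2]; auto.
        destruct (U (fcompose incl k)) as [V1 V2].
        { intro x. simpl. now rewrite Hk1. }
        { intro u. simpl. now rewrite Hk2. }
        split.
        -- intro y. assert (E : proj1_sig (fob k y) = y).
           { specialize (U1 y); specialize (V1 y); simpl in *. congruence. }
           rewrite <- E. exact (proj2_sig (fob k y)).
        -- intro v. assert (E : proj1_sig (fmor k v) = v).
           { specialize (U2 v); specialize (V2 v); simpl in *. congruence. }
           rewrite <- E. exact (proj2_sig (fmor k v)).
Qed.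

Definition Gfix M G C (A : MAction (ProdMG M G) C) (H : Ob (mcat M) -> Prop) (phi : Ob (mcat M) -> gcar G) x :=
  forall h, H h -> g_ob A (phi h) (m_ob A h x) = x.
Definition Gfixm M G C (A : MAction (ProdMG M G) C) (H : Ob (mcat M) -> Prop) (phi : Ob (mcat M) -> gcar G) u :=
  forall h, H h -> g_mor A (phi h) (m_mor A (idm h) u) = u.

Lemma Gfix_iff M G C (A : MAction (ProdMG M G) C) H phi x :
  fixob A (graph_subgroup H phi) x <-> Gfix A H phi x.
Proof.
  split.
  - intros Hx h Hh. rewrite <- aob_split. apply (Hx (h, phi h)). split; auto.
  - intros Hx [h g] [Hh e]. simpl in *. subst. rewrite aob_split. auto.
Qed.

Lemma Gfixm_iff M G C (A : MAction (ProdMG M G) C) H phi u :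
  fixmor A (graph_subgroup H phi) u <-> Gfixm A H phi u.
Proof.
  split.
  - intros Hx h Hh. rewrite <- amor_split. apply (Hx (h, phi h)). split; auto.
  - intros Hx [h g] [Hh e]. simpl in *. subst. rewrite amor_split. auto.
Qed.

Lemma Gfix_f M G C D (A : MAction (ProdMG M G) C) (B : MAction (ProdMG M G) D) f H phi x :
  Equivariant A B f -> Gfix A H phi x -> Gfix B H phi (fob f x).
Proof.
  intros e Hx h Hh. rewrite <- (equiv_m_ob e), <- (equiv_g_ob e). now rewrite Hx.
Qed.

Lemma L1 M G C (A : MAction (ProdMG M G) C) Q (q : Functor C Q) (AQ : MAction M Q) H c :
  free_action A -> is_orbit_quotient A q -> induced_action A q AQ ->
  (forall h h', H h -> H h' -> H (tens h h')) ->
  fixob AQ H (fob q c) -> exists phi, group_hom_on H phi /\ Gfix A H phi c.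
Proof.
  intros Hf Hq [I1 I2] Hcl Hc.
  destruct (quot_rel Hf Hq) as [Ro Rm].
  assert (ex : forall h, exists g, H h -> g_ob A g (m_ob A h c) = c).
  { intro h. destruct (classic (H h)) as [Hh|n].
    - assert (E : fob q (m_ob A h c) = fob q c) by (rewrite I1; apply Hc; auto).
      destruct (Ro _ _ E) as [g eg]. exists g; auto.
    - exists gone; intro; contradiction. }
  destruct (my_choice _ ex) as [phi Hphi]. exists phi. split; [|exact Hphi].
  intros h h' Hh Hh'. apply (free_cancel Hf) with (x := m_ob A (tens h h') c).
  rewrite Hphi by auto. rewrite <- g_ob_mul, <- m_ob_mul, (gm_comm A _ (phi h')).
  rewrite (Hphi h') by auto. rewrite Hphi; auto.
Qed.

Lemma L2 M G C (A : MAction (ProdMG M G) C) Q (q : Functor C Q) (AQ : MAction M Q) H phi u :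
  free_action A -> is_orbit_quotient A q -> induced_action A q AQ ->
  Gfix A H phi (src u) -> fixmor AQ H (fmor q u) -> Gfixm A H phi u.
Proof.
  intros Hf Hq [I1 I2] Hc Hu h Hh.
  destruct (quot_rel Hf Hq) as [Ro Rm].
  assert (E : fmor q (m_mor A (idm h) u) = fmor q u) by (rewrite I2; apply Hu; auto).
  destruct (Rm _ _ E) as [g eg].
  assert (es := f_equal src eg). rewrite src_g_mor, src_m_mor, src_idm in es.
  rewrite <- (Hc h Hh) in es at 1. apply (free_cancel Hf) in es. subst. auto.
Qed.

Lemma L3 M G C (A : MAction (ProdMG M G) C) Q (q : Functor C Q) (AQ : MAction M Q) H phi c :
  is_orbit_quotient A q -> induced_action A q AQ ->
  Gfix A H phi c -> fixob AQ H (fob q c).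
Proof.
  intros [Hq1 _] [I1 I2] Hc h Hh. rewrite <- I1. rewrite <- (Hq1 (phi h)). now rewrite Hc.
Qed.

Lemma L4 M G C (A : MAction (ProdMG M G) C) Q (q : Functor C Q) (AQ : MAction M Q) H phi u :
  is_orbit_quotient A q -> induced_action A q AQ ->
  Gfixm A H phi u -> fixmor AQ H (fmor q u).
Proof.
  intros [_ [Hq2 _]] [I1 I2] Hu h Hh. rewrite <- I2. rewrite <- (Hq2 (phi h)). now rewrite Hu.
Qed.



Ltac pj h := apply (f_equal (@proj1_sig _ _)) in h; simpl in h.

Unset Implicit Arguments.

Theorem mainTheorem8
  (M : CatMonoid) (F : (Ob (mcat M) -> Prop) -> Prop) (G : Group)
  (C D : Category)
  (AC : MAction (ProdMG M G) C) (AD : MAction (ProdMG M G) D)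
  (f : Functor C D)
  (QC QD : Category) (qC : Functor C QC) (qD : Functor D QD)
  (AQC : MAction M QC) (AQD : MAction M QD)
  (fbar : Functor QC QD) :
  is_family F ->
  Equivariant AC AD f ->
  (forall (H : Ob (mcat M) -> Prop) (phi : Ob (mcat M) -> gcar G),
      F H -> group_hom_on H phi -> K_equivalence AC AD f (graph_subgroup H phi)) ->
  free_action AC -> free_action AD ->
  is_orbit_quotient AC qC -> is_orbit_quotient AD qD ->
  induced_action AC qC AQC -> induced_action AD qD AQD ->
  (forall x, fob fbar (fob qC x) = fob qD (fob f x)) ->
  (forall u, fmor fbar (fmor qC u) = fmor qD (fmor f u)) ->
  forall H : Ob (mcat M) -> Prop, F H -> K_equivalence AQC AQD fbar H.
Proof.
  intros HF ef Hequiv HfC HfD HqC HqD IC ID Hfo Hfm H HH.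
  destruct (proj1 HF H HH) as [[_ [Hcl _]] _].
  destruct (quot_surj HfC HqC) as [SoC SmC]. destruct (quot_surj HfD HqD) as [SoD SmD].
  destruct (quot_rel HfC HqC) as [RoC RmC]. destruct (quot_rel HfD HqD) as [RoD RmD].
  assert (eQ : Equivariant AQC AQD fbar).
  { split.
    - intros m y. destruct (SoC y) as [x <-].
      rewrite <- (proj1 IC), !Hfo, (equiv_m_ob ef), (proj1 ID). reflexivity.
    - intros a v. destruct (SmC v) as [u <-].
      rewrite <- (proj2 IC), !Hfm, (equiv_m_mor ef), (proj2 ID). reflexivity. }
  exists eQ. apply equiv_of_ffes.
  -
    intros [y0 Hy0]. destruct (SoD y0) as [d <-].
    destruct (L1 d HfD HqD ID Hcl Hy0) as [phi [Hphi Hd]].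
    destruct (Hequiv H phi HH Hphi) as [e' Heq].
    pose (Y := exist _ d (proj2 (Gfix_iff _ _ _ _) Hd) : FOb AD (graph_subgroup H phi)).
    destruct (equiv_es _ Heq Y) as (x' & a & b & h1 & h2 & h3 & h4 & h5 & h6).
    destruct x' as [x0 Hx0]. destruct a as [a0 Ha0]. destruct b as [b0 Hb0].
    pose proof (proj1 (Gfix_iff _ _ _ _) Hx0) as Gx0.
    pose proof (proj1 (Gfixm_iff _ _ _ _) Ha0) as Ga0.
    pose proof (proj1 (Gfixm_iff _ _ _ _) Hb0) as Gb0.
    exists (exist _ (fob qC x0) (L3 HqC IC Gx0)).
    exists (exist _ (fmor qD a0) (L4 HqD ID Ga0)).
    exists (exist _ (fmor qD b0) (L4 HqD ID Gb0)).
    assert (h5' := h5). assert (h6' := h6).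
    pj h1. pj h2. pj h3. pj h4.
    pj h5'. pj h6'.
    rewrite fcomp_val in h5' by (apply sig_eq; simpl; rewrite h2, h3; reflexivity).
    rewrite fcomp_val in h6' by (apply sig_eq; simpl; rewrite h4; symmetry; apply h1).
    simpl in h5', h6'.
    repeat split; apply sig_eq; simpl.
    + now rewrite f_src, h1, Hfo.
    + now rewrite f_tgt, h2.
    + now rewrite f_src, h3.
    + now rewrite f_tgt, h4, Hfo.
    + rewrite fcomp_val; simpl.
      * rewrite <- f_comp by congruence. now rewrite h5', f_idm, Hfo.
      * apply sig_eq; simpl. rewrite f_tgt, f_src. congruence.
    + rewrite fcomp_val; simpl.
      * rewrite <- f_comp by congruence. now rewrite h6', f_idm.
      * apply sig_eq; simpl. rewrite f_tgt, f_src. congruence.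
  -
    intros [u0 Hu0] [u1 Hu1] es et ef'. pj es. pj et. pj ef'.
    apply sig_eq; simpl.
    destruct (SmC u0) as [w <-]. destruct (SmC u1) as [w1 <-].
    rewrite !f_src in es. rewrite !f_tgt in et. rewrite !Hfm in ef'.
    assert (Hc : fixob AQC H (fob qC (src w))) by (rewrite <- f_src; exact (fix_src Hu0)).
    destruct (L1 (src w) HfC HqC IC Hcl Hc) as [phi [Hphi Gc]].
    destruct (RoC _ _ es) as [g eg].
    set (w' := g_mor AC (ginv g) w1).
    assert (sw' : src w' = src w) by (unfold w'; rewrite src_g_mor, eg; apply g_ob_inv).
    assert (qw' : fmor qC w' = fmor qC w1) by (apply (proj1 (proj2 HqC))).
    rewrite <- qw' in Hu1 |- *.
    assert (et' : fob qC (tgt w) = fob qC (tgt w')).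
    { rewrite et. unfold w'. rewrite tgt_g_mor. symmetry; apply (proj1 HqC). }
    assert (ef2 : fmor qD (fmor f w) = fmor qD (fmor f w')).
    { rewrite ef'. unfold w'. rewrite (equiv_g_mor ef). symmetry; apply (proj1 (proj2 HqD)). }
    assert (Gw := L2 w HfC HqC IC Gc Hu0).
    assert (Gw' : Gfixm AC H phi w') by (apply (L2 w' HfC HqC IC); [rewrite sw'; exact Gc | exact Hu1]).
    destruct (RmD _ _ ef2) as [k ek].
    assert (k1 : k = gone).
    { assert (E := f_equal src ek). rewrite src_g_mor, !f_src, sw' in E.
      apply (free_cancel HfD) with (x := fob f (src w)). rewrite <- E. now rewrite g_ob_one. }
    subst k. rewrite g_mor_one in ek.
    destruct (RoC _ _ et') as [k' ek'].
    assert (k1 : k' = gone).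
    { assert (E := f_equal tgt ek). rewrite !f_tgt, ek', (equiv_g_ob ef) in E.
      apply (free_cancel HfD) with (x := fob f (tgt w)). rewrite g_ob_one. exact E. }
    subst k'. rewrite g_ob_one in ek'.
    destruct (Hequiv H phi HH Hphi) as [e' Heq].
    pose (W := exist _ w (proj2 (Gfixm_iff _ _ _ _) Gw) : FMor AC (graph_subgroup H phi)).
    pose (W' := exist _ w' (proj2 (Gfixm_iff _ _ _ _) Gw') : FMor AC (graph_subgroup H phi)).
    assert (WW : W = W').
    { apply (equiv_faithful _ Heq); apply sig_eq; simpl; auto. }
    pj WW. congruence.
  -
    intros [x0 Hx0] [x1 Hx1] [v0 Hv0] hs ht. pj hs. pj ht.
    destruct (SoC x0) as [c <-]. destruct (SoC x1) as [c1 <-]. destruct (SmD v0) as [w0 <-].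
    rewrite f_src, Hfo in hs. rewrite f_tgt, Hfo in ht.
    destruct (L1 c HfC HqC IC Hcl Hx0) as [phi [Hphi Gc]].
    destruct (RoD _ _ hs) as [k ek].
    set (w := g_mor AD k w0).
    assert (sw : src w = fob f c) by (unfold w; rewrite src_g_mor; congruence).
    assert (qw : fmor qD w = fmor qD w0) by (apply (proj1 (proj2 HqD))).
    assert (ht' : fob qD (fob f c1) = fob qD (tgt w)).
    { unfold w. rewrite tgt_g_mor, (proj1 HqD). congruence. }
    destruct (RoD _ _ ht') as [k' ek'].
    set (c2 := g_ob AC k' c1).
    assert (tw : tgt w = fob f c2) by (unfold c2; rewrite (equiv_g_ob ef); exact ek').
    assert (q2 : fob qC c2 = fob qC c1) by (apply (proj1 HqC)).
    assert (Hx2 : fixob AQC H (fob qC c2)) by (rewrite q2; exact Hx1).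
    destruct (L1 c2 HfC HqC IC Hcl Hx2) as [psi [_ Gc2]].
    assert (Hv0' : fixmor AQD H (fmor qD w)) by (rewrite qw; exact Hv0).
    assert (Gw : Gfixm AD H phi w).
    { apply (L2 w HfD HqD ID); [rewrite sw; exact (Gfix_f ef Gc) | exact Hv0']. }
    assert (Gtw : Gfix AD H phi (tgt w)).
    { apply Gfix_iff. apply fix_tgt. apply Gfixm_iff. exact Gw. }
    assert (Gc2' : Gfix AC H phi c2).
    { intros h Hh. assert (e1 := Gtw h Hh). assert (e2 := Gfix_f ef Gc2 h Hh).
      rewrite tw in e1. rewrite <- e2 in e1 at 2.
      apply (free_cancel HfD) in e1. rewrite e1. apply Gc2; auto. }
    destruct (Hequiv H phi HH Hphi) as [e' Heq].
    pose (X := exist _ c (proj2 (Gfix_iff _ _ _ _) Gc) : FOb AC (graph_subgroup H phi)).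
    pose (X' := exist _ c2 (proj2 (Gfix_iff _ _ _ _) Gc2') : FOb AC (graph_subgroup H phi)).
    pose (V := exist _ w (proj2 (Gfixm_iff _ _ _ _) Gw) : FMor AD (graph_subgroup H phi)).
    destruct (equiv_full _ Heq X X' V) as [U [hU1 [hU2 hU3]]].
    { apply sig_eq; simpl. exact sw. }
    { apply sig_eq; simpl. exact tw. }
    destruct U as [u0 Hu0]. pj hU1. pj hU2. pj hU3.
    pose proof (proj1 (Gfixm_iff _ _ _ _) Hu0) as Gu.
    exists (exist _ (fmor qC u0) (L4 HqC IC Gu)). repeat split; apply sig_eq; simpl.
    + now rewrite f_src, hU1.
    + now rewrite f_tgt, hU2.
    + rewrite Hfm, hU3. exact qw.
Qed.
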